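(* Let $A,B,C$ be rooted trees, let $f\colon B\to A$ be a light confluent epimorphism and $g\colon C\to A$ a confluent epimorphism. Let $D$ be the graph with $V(D)=\{(b,c)\in V(B)\times V(C): f(b)=g(c)\}$ and $\langle (b,c),(b',c')\rangle\in E(D)$ iff $\langle b,b'\rangle\in E(B)$ and $\langle c,c'\rangle\in E(C)$, with root $(r_B,r_C)$, and let $f_0(b,c)=b$, $g_0(b,c)=c$. Then $D$ is a rooted tree, $f_0\colon D\to B$ is a confluent epimorphism and $g_0\colon D\to C$ is a light confluent epimorphism (of rooted trees), and $f\circ f_0=g\circ g_0$. Moreover, if $g$ is light then so is $f_0$, and if both $f$ and $g$ are end vertex preserving then so are $f_0$ and $g_0$.
   Context: A graph is a pair $(V,E)$ with $E\subseteq V^2$ reflexive and symmetric. A tree is a finite graph in which any two distinct vertices are joined by a unique sequence of pairwise distinct vertices with consecutive ones adjacent. A rooted tree is a tree $T$ with a distinguished vertex $r_T$ (the root); $x\le_T y$ means the path from $r_T$ to $y$ contains $x$. An epimorphism between rooted trees is a map on vertices sending edges to edges, surjective on vertices and on edges, sending root to root and order-preserving ($a\le b\Rightarrow f(a)\le f(b)$). A set $S$ of vertices is connected if it cannot be written as a union of two nonempty disjoint sets with no edge between them; components are maximal connected subsets. An epimorphism $f$ is confluent if for every connected $Q$ in the target and every component $K$ of $f^{-1}(Q)$, $f(K)=Q$; it is light if no two distinct vertices with the same image are joined by an edge. An end vertex of a rooted tree is a non-root vertex of order $1$ (order = number of non-degenerate edges containing it); an epimorphism is end vertex preserving if it maps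 end vertices to end vertices. *)

(* Defs.v *)
From mathcomp Require Import all_boot.
Set Implicit Arguments. Unset Strict Implicit. Unset Printing Implicit Defensive.

Definition is_graph (T : finType) (E : rel T) : Prop :=
  reflexive E /\ symmetric E.

Definition arc (T : finType) (E : rel T) (x y : T) (q : seq T) : bool :=
  [&& path E x q, last x q == y & uniq (x :: q)].

Definition is_tree (T : finType) (E : rel T) : Prop :=
  is_graph E /\
  forall x y : T, x != y -> exists! q : seq T, arc E x y q.

Definition tree_le (T : finType) (E : rel T) (r x y : T) : Prop :=
  exists q : seq T, arc E r y q /\ x \in r :: q.

Definition epimorphism (T1 T2 : finType) (E1 : rel T1) (r1 : T1)
    (E2 : rel T2) (r2 : T2) (f : T1 -> T2) : Prop :=
  [/\ (forall a b, E1 a b -> E2 (f a) (f b)),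
      (forall c, exists a, f a = c),
      (forall c d, E2 c d -> exists a b, [/\ E1 a b, f a = c & f b = d]),
      f r1 = r2 &
      (forall a b, tree_le E1 r1 a b -> tree_le E2 r2 (f a) (f b))].

Definition connected_set (T : finType) (E : rel T) (S : {set T}) : Prop :=
  ~ exists P Q : {set T},
      [/\ P :|: Q = S, P != set0, Q != set0, [disjoint P & Q] &
          forall p q, p \in P -> q \in Q -> ~~ E p q].

Definition component (T : finType) (E : rel T) (S K : {set T}) : Prop :=
  [/\ K \subset S, connected_set E K &
      forall K' : {set T}, K \subset K' -> K' \subset S ->
        connected_set E K' -> K' = K].

Definition confluent (T1 T2 : finType) (E1 : rel T1) (E2 : rel T2)
    (f : T1 -> T2) : Prop :=
  forall Q : {set T2}, connected_set E2 Q ->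
    forall K : {set T1}, component E1 (f @^-1: Q) K -> f @: K = Q.

Definition light (T1 T2 : finType) (E1 : rel T1) (f : T1 -> T2) : Prop :=
  forall a b : T1, a != b -> f a = f b -> ~~ E1 a b.

Definition order (T : finType) (E : rel T) (x : T) : nat :=
  #|[set y | (y != x) && E x y]|.

Definition end_vertex (T : finType) (E : rel T) (r x : T) : Prop :=
  x != r /\ order E x = 1.

Definition end_vertex_preserving (T1 T2 : finType) (E1 : rel T1) (r1 : T1)
    (E2 : rel T2) (r2 : T2) (f : T1 -> T2) : Prop :=
  forall x, end_vertex E1 r1 x -> end_vertex E2 r2 (f x).

(* Main.v *)
Require Import Defs.
From mathcomp Require Import all_boot.
Set Implicit Arguments. Unset Strict Implicit. Unset Printing Implicit Defensive.

Section Struct.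
Variables (T : finType) (E : rel T) (r : T) (p : T -> T) (h : T -> nat).

Definition pstruct := [/\ is_graph E, p r = r,
  (forall x, x != r -> h (p x) < h x), (forall x, E x (p x)) &
  (forall x y, E x y -> x != y -> y = p x \/ x = p y)].

Hypothesis PS : pstruct.

Lemma ps_refl : reflexive E. Proof. by case: PS => [[]]. Qed.
Lemma ps_sym : symmetric E. Proof. by case: PS => [[]]. Qed.
Lemma ps_root : p r = r. Proof. by case: PS => _ H. Qed.
Lemma ps_dec x : x != r -> h (p x) < h x. Proof. by case: PS => _ _ H _ _; apply: H. Qed.
Lemma ps_edge x : E x (p x). Proof. by case: PS => _ _ _ H _; apply: H. Qed.
Lemma ps_edges x y : E x y -> x != y -> y = p x \/ x = p y.
Proof. by case: PS => _ _ _ _ H; apply: H. Qed.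

Lemma ps_neq x : x != r -> p x != x.
Proof. by move=> /ps_dec H; apply/eqP => E'; rewrite E' ltnn in H. Qed.

Lemma ps_fix x : p x = x -> x = r.
Proof. by move=> H; apply/eqP; apply: contraTT (eqxx (p x)); rewrite {2}H => /ps_neq. Qed.

Lemma ps_hp x : h (p x) <= h x.
Proof.
case: (eqVneq x r) => [->|/ps_dec/ltnW //]; by rewrite ps_root.
Qed.

Lemma ps_hiter k x : h (iter k p x) <= h x.
Proof. elim: k => //= k IH; exact: leq_trans (ps_hp _) IH. Qed.

Lemma ps_iter_root k : iter k p r = r.
Proof. by elim: k => //= k ->; rewrite ps_root. Qed.

Lemma ps_connect_root x : connect E x r.
Proof.
have [n] := ubnP (h x); elim: n x => // n IH x /= Hx.
case: (eqVneq x r) => [->|xr]; first exact: connect0.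
apply: connect_trans (connect1 (ps_edge x)) _; apply: IH.
exact: leq_trans (ps_dec xr) _.
Qed.

Lemma ps_connect x y : connect E x y.
Proof.
apply: connect_trans (ps_connect_root x) _.
by rewrite (sym_connect_sym ps_sym); apply: ps_connect_root.
Qed.

Lemma down_path q x : path E x q -> uniq (x :: q) -> q != [::] ->
  x = p (head x q) -> h x < h (last x q).
Proof.
elim: q x => // y q IH x /= /andP[Exy Pq] /andP[xq Uq] _ xpy.
have yr : y != r.
  apply/eqP => yr; move: xq; rewrite inE xpy yr ps_root eqxx //.
have hxy : h x < h y by rewrite xpy; apply: ps_dec.
case: q IH Pq Uq xq => [|z q] IH Pq Uq xq //=.
move: Pq => /= /andP[Eyz Pq].
have yz : y != z by move: Uq => /= /andP[]; rewrite inE negb_or => /andP[].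
case: (ps_edges Eyz yz) => [zpy|ypz].
  by move: xq; rewrite !inE zpy -xpy eqxx !orbT.
apply: ltn_trans hxy _; apply: (IH y) => //=; by rewrite Eyz.
Qed.

Lemma arc_nil (x : T) (q : seq T) : last x q = x -> uniq (x :: q) -> q = [::].
Proof.
case: q => // a q /= H /andP[xq _].
by move: xq; rewrite -{1}H; have := mem_last a q; rewrite inE => ->.
Qed.

Lemma arc_rev x q y : path E x q -> last x q = y -> uniq (x :: q) ->
  [/\ path E y (rev (belast x q)), last y (rev (belast x q)) = x &
      uniq (y :: rev (belast x q))].
Proof.
move=> Pq Lq Uq; split.
- rewrite -Lq rev_path; apply: sub_path Pq => a b; by rewrite ps_sym.
- by case: q Lq {Pq Uq} => [|a q] /= Lq; rewrite ?Lq // rev_cons last_rcons.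
- rewrite -Lq -rev_rcons rev_uniq -lastI //.
Qed.

Lemma belast_inj (x : T) (q1 q2 : seq T) : last x q1 = last x q2 -> belast x q1 = belast x q2 ->
  q1 = q2.
Proof.
move=> L B; have : x :: q1 = x :: q2 by rewrite !lastI L B.
by case.
Qed.

Lemma ps_arc_uniq x y q1 q2 :
  path E x q1 -> last x q1 = y -> uniq (x :: q1) ->
  path E x q2 -> last x q2 = y -> uniq (x :: q2) -> q1 = q2.
Proof.
have [n] := ubnP (h x + h y); elim: n x y q1 q2 => // n IH x y q1 q2 Hn.
move=> P1 L1 U1 P2 L2 U2.
case: (eqVneq x y) => [xy|xy].
  rewrite -xy in L1 L2; by rewrite (arc_nil L1 U1) (arc_nil L2 U2).
wlog hyx : x y q1 q2 P1 L1 U1 P2 L2 U2 Hn xy / h y <= h x.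
  move=> W; case: (leqP (h y) (h x)) => [hyx|hxy]; first exact: (W x y q1 q2).
  have [Q1 M1 V1] := arc_rev P1 L1 U1; have [Q2 M2 V2] := arc_rev P2 L2 U2.
  have : rev (belast x q1) = rev (belast x q2).
    apply: (W y x _ _ Q1 M1 V1 Q2 M2 V2); first by rewrite addnC.
      by rewrite eq_sym.
    exact: ltnW.
  by move/(can_inj (@revK _)); apply: belast_inj; rewrite L1 L2.
have step : forall q, path E x q -> last x q = y -> uniq (x :: q) ->
    exists q', q = p x :: q'.
  move=> [|a q] /= Pq Lq Uq; first by move: xy; rewrite Lq eqxx.
  move: Pq => /andP[Exa Pq].
  have xa : x != a by move: Uq => /andP[]; rewrite inE negb_or => /andP[].
  case: (ps_edges Exa xa) => [->|xpa]; first by exists q.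
  have := @down_path (a :: q) x; rewrite /= Exa Pq Lq Uq => /(_ isT isT isT xpa).
  by rewrite ltnNge hyx.
have [q1' E1] := step _ P1 L1 U1; have [q2' E2] := step _ P2 L2 U2.
subst q1 q2; congr cons.
have xr : x != r.
  apply/eqP=> xr; move: U1 => /= /andP[]; by rewrite xr ps_root inE eqxx.
move: P1 P2 U1 U2 L1 L2 => /= /andP[_ P1] /andP[_ P2] /andP[_ U1] /andP[_ U2] L1 L2.
apply: (IH (p x) y _ _ _ P1 L1 U1 P2 L2 U2); rewrite -ltnS; apply: leq_trans Hn.
by rewrite ltnS ltn_add2r ps_dec.
Qed.

Lemma ps_tree : is_tree E.
Proof.
split; first by split; [exact: ps_refl | exact: ps_sym].
move=> x y xy.
have /connectP[q Pq Lq] := ps_connect x y.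
case: (shortenP Pq) Lq => q' Pq' Uq' _ Lq.
exists q'; split; first by apply/and3P; split => //; rewrite -Lq.
move=> q2 /and3P[P2 /eqP L2 U2].
by apply: (@ps_arc_uniq x y) => //; rewrite Lq.
Qed.

Lemma ps_anc y : exists q, Defs.arc E r y q /\
  forall x, x \in r :: q <-> exists k, iter k p y = x.
Proof.
have [n] := ubnP (h y); elim: n y => // n IH y Hy.
case: (eqVneq y r) => [->|yr].
  exists [::]; split; first by rewrite /Defs.arc /= eqxx.
  move=> x; rewrite inE; split; first by move/eqP->; exists 0.
  by case=> k <-; rewrite ps_iter_root.
have [q [/and3P[Pq /eqP Lq Uq] Hq]] := IH (p y) (leq_trans (ps_dec yr) Hy).
have yq : y \notin r :: q.
  apply/negP => /Hq [k Hk].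
  have := ps_hiter k (p y); rewrite Hk => H.
  by have := leq_trans (ps_dec yr) H; rewrite ltnn.
exists (rcons q y); split.
  rewrite /Defs.arc rcons_path Pq Lq last_rcons eqxx -rcons_cons rcons_uniq yq Uq.
  by rewrite ps_sym ps_edge.
move=> x; rewrite -rcons_cons mem_rcons inE; split.
  case/orP=> [/eqP->|/Hq [k Hk]]; first by exists 0.
  by exists k.+1; rewrite iterSr.
case=> [[|k]] /= Hk; first by rewrite Hk eqxx.
by apply/orP; right; apply/Hq; exists k; rewrite -iterSr.
Qed.

Lemma ps_tree_le x y : tree_le E r x y <-> exists k, iter k p y = x.
Proof.
have [q [/and3P[Pq /eqP Lq Uq] Hq]] := ps_anc y.
split.
  case=> q' [/and3P[P' /eqP L' U'] xq']; apply/Hq.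
  by rewrite (@ps_arc_uniq r y q q').
by move/Hq => xq; exists q; split => //; rewrite /Defs.arc Pq Lq eqxx Uq.
Qed.

Lemma ps_adj_anc x y k : iter k p y = x -> E x y -> x = y \/ x = p y.
Proof.
move=> Hk Exy; case: (eqVneq x y) => [->|xy]; first by left.
case: (ps_edges Exy xy) => [ypx|xpy]; last by right.
case: (eqVneq x r) => [xr|xr].
  by left; rewrite ypx xr ps_root.
case: k Hk => [|k] Hk; first by move: xy; rewrite -Hk eqxx.
have := ps_hiter k (p y); rewrite -iterSr Hk => H1.
have := ps_dec xr; rewrite -ypx => H2.
have yr : y != r by apply: contraNneq xr => yr; rewrite -Hk yr ps_iter_root.
by have := leq_ltn_trans H1 (ps_dec yr); rewrite ltnNge ltnW.
Qed.

End Struct.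


Section TreeS.
Variables (T : finType) (E : rel T) (r : T).
Hypothesis TE : is_tree E.

Lemma tr_refl : reflexive E. Proof. by case: TE => [[]]. Qed.
Lemma tr_sym : symmetric E. Proof. by case: TE => [[]]. Qed.

Lemma tr_arc_uniq y q1 q2 : Defs.arc E r y q1 -> Defs.arc E r y q2 -> q1 = q2.
Proof.
move=> /and3P[P1 /eqP L1 U1] /and3P[P2 /eqP L2 U2].
case: (eqVneq r y) => [ry|ry].
  rewrite -ry in L1 L2; by rewrite (arc_nil L1 U1) (arc_nil L2 U2).
case: TE => _ /(_ r y ry) [q [_ Hq]].
rewrite -(Hq q1) ?(Hq q2) //; apply/and3P; split => //; apply/eqP => //.
Qed.

Lemma tr_ex_arc y : exists q, Defs.arc E r y q.
Proof.
case: (eqVneq r y) => [<-|ry]; first by exists [::]; rewrite /Defs.arc /= eqxx.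
by case: TE => _ /(_ r y ry) [q [Hq _]]; exists q.
Qed.

Lemma split_mem (x1 x : T) s : x \in x1 :: s ->
  exists p1 p2, last x1 p1 = x /\ s = p1 ++ p2.
Proof. by case/splitPl => p1 p2 L; exists p1, p2. Qed.

Definition tarc y := xchoose (tr_ex_arc y).
Lemma tarcP y : Defs.arc E r y (tarc y). Proof. exact: xchooseP. Qed.
Lemma tarcE y q : Defs.arc E r y q -> tarc y = q.
Proof. by move/(tr_arc_uniq (tarcP y)). Qed.

Definition tp y := last r (belast r (tarc y)).
Definition th y := size (tarc y).

Lemma tarc_r : tarc r = [::].
Proof. by apply: tarcE; rewrite /Defs.arc /= eqxx. Qed.

Lemma tarc_nr y : y != r -> exists q, tarc y = rcons q y /\ Defs.arc E r (last r q) q.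
Proof.
move=> yr; have := tarcP y; case/lastP: (tarc y) => [|q z].
  by move=> /and3P[_ /eqP ry _]; move: yr; rewrite -ry eqxx.
move=> /and3P[P /eqP L U]; rewrite last_rcons in L; subst z.
exists q; split => //.
move: P U; rewrite rcons_path -rcons_cons rcons_uniq => /andP[P _] /andP[_ U].
by rewrite /Defs.arc P eqxx U.
Qed.

Lemma tp_parent y q : tarc y = rcons q y -> tp y = last r q.
Proof. by rewrite /tp => ->; rewrite belast_rcons. Qed.

Lemma tr_pstruct : pstruct E r tp th.
Proof.
split.
- by case: TE.
- by rewrite /tp tarc_r.
- move=> x xr; have [q [Hq Aq]] := tarc_nr xr.
  by rewrite /th (tp_parent Hq) (tarcE Aq) Hq size_rcons.
- move=> x; case: (eqVneq x r) => [->|xr]; first by rewrite /tp tarc_r /= tr_refl.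
  have [q [Hq _]] := tarc_nr xr; rewrite (tp_parent Hq) tr_sym.
  by have := tarcP x; rewrite Hq => /and3P[]; rewrite rcons_path => /andP[].
move=> x y Exy xy.
have /and3P[Px /eqP Lx Ux] := tarcP x.
case yx: (y \in r :: tarc x).
  left.
  have [p1 [p2 [Ly Hx]]] := split_mem yx.
  move: Px Lx Ux; rewrite Hx.
  rewrite cat_path last_cat -cat_cons cat_uniq => /andP[P1 P2] L2 /and3P[U1 D U2].
  have A1 : Defs.arc E r y p1 by rewrite /Defs.arc P1 Ly eqxx U1.
  have yp2 : y \notin p2.
    by apply: contra D => yp2; apply/hasP; exists y => //; rewrite -Ly mem_last.
  have P2x : p2 = [:: x].
    case: TE => _ /(_ y x) []; first by rewrite eq_sym.
    move=> q [_ Hq]; rewrite -(Hq [:: x]) ?(Hq p2) //.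
      by rewrite /Defs.arc /= yp2 U2 -Ly P2 L2 eqxx.
    by rewrite /Defs.arc /= tr_sym Exy eqxx inE eq_sym xy.
  by rewrite (@tp_parent x p1) ?Ly // Hx P2x cats1.
right.
have A : Defs.arc E r y (rcons (tarc x) y).
  rewrite /Defs.arc rcons_path Px Lx Exy last_rcons eqxx -rcons_cons rcons_uniq.
  by rewrite yx Ux.
by rewrite (tp_parent (tarcE A)) Lx.
Qed.

End TreeS.


Section Conn.
Variables (T : finType) (E : rel T).

Definition restr (S : {set T}) : rel T := [rel u v | [&& E u v, u \in S & v \in S]].
Definition reach S x := [set y | connect (restr S) x y].

Lemma restr_path_in (S : {set T}) u s : path (restr S) u s -> u \in S -> last u s \in S.
Proof.
elim: s u => //= v s IH u /andP[/and3P[_ _ vS] P] _; exact: IH.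
Qed.

Lemma connect_in (S : {set T}) u v : connect (restr S) u v -> u \in S -> v \in S.
Proof. by case/connectP => s P ->; apply: restr_path_in. Qed.

Lemma connect_mono (S S' : {set T}) (u v : T) : S \subset S' -> connect (restr S) u v -> connect (restr S') u v.
Proof.
move=> sub; apply: connect_sub => a b /and3P[Eab aS bS]; apply: connect1.
by rewrite /restr /= Eab !(subsetP sub).
Qed.

Lemma path_cross (P S : {set T}) u s : path (restr S) u s -> u \in P ->
  last u s \notin P -> exists a b, [/\ a \in P, b \in S, b \notin P & E a b].
Proof.
elim: s u => [|v s IH] u /=; first by move=> _ uP; rewrite uP.
move=> /andP[/and3P[Euv uS vS] Ps] uP L.
case vP: (v \in P); first exact: (IH v Ps vP L).
by exists u, v; rewrite vP.
Qed.

Lemma connected_pathP (S : {set T}) : connected_set E S <-> {in S &, forall x y, connect (restr S) x y}.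
Proof.
split.
  move=> C x y xS yS; apply/idPn => nc; apply: C.
  exists (S :&: reach S x), (S :\: reach S x); split.
  - apply/setP => z; rewrite !inE; by case: (z \in S); rewrite /= ?andbT ?andbF ?orbN.
  - by apply/set0Pn; exists x; rewrite !inE xS connect0.
  - by apply/set0Pn; exists y; rewrite !inE yS nc.
  - rewrite -setI_eq0; apply/eqP/setP => z; rewrite !inE.
    by case: (connect _ x z); rewrite ?andbF.
  move=> a b; rewrite !inE => /andP[aS xa] /andP[/negP nb bS]; apply/negP => Eab.
  apply: nb; apply: connect_trans xa _; apply: connect1; by rewrite /restr /= Eab aS bS.
move=> H [P [Q [U nP nQ D NE]]].
case/set0Pn: nP => p pP; case/set0Pn: nQ => q qQ.
have pS : p \in S by rewrite -U inE pP.
have qS : q \in S by rewrite -U inE qQ orbT.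
case/connectP: (H p q pS qS) => s Ps Ls.
have qP : q \notin P.
  by apply/negP => qP; move: (disjointFr D qP); rewrite qQ.
have := path_cross Ps pP; rewrite -Ls => /(_ qP) [a [b [aP bS bP Eab]]].
have bQ : b \in Q by move: bS; rewrite -U inE (negbTE bP).
by move: (NE a b aP bQ); rewrite Eab.
Qed.

Hypothesis Esym : symmetric E.

Lemma restr_sym (S : {set T}) : symmetric (restr S).
Proof. by move=> a b; rewrite /restr /= Esym; case: (a \in S); case: (b \in S); rewrite ?andbF ?andbT. Qed.

Lemma reach_path_in (S : {set T}) x u s : path (restr S) u s -> u \in reach S x ->
  path (restr (reach S x)) u s.
Proof.
elim: s u => //= v s IH u /andP[/and3P[Euv uS vS] P] ur.
have vr : v \in reach S x.
  rewrite inE; apply: connect_trans (_ : connect _ u v); first by move: ur; rewrite inE.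
  by apply: connect1; rewrite /restr /= Euv uS vS.
by rewrite /restr /= Euv ur vr /=; apply: IH.
Qed.

Lemma reach_self (S : {set T}) (x : T) : x \in reach S x.
Proof. by rewrite inE connect0. Qed.

Lemma reach_connected (S : {set T}) (x : T) : connected_set E (reach S x).
Proof.
apply/connected_pathP => y z yr zr.
have H : forall w, w \in reach S x -> connect (restr (reach S x)) x w.
  move=> w; rewrite inE => /connectP [s Ps ->]; apply/connectP; exists s => //.
  by apply: reach_path_in => //; apply: reach_self.
apply: connect_trans (H z zr).
by rewrite (sym_connect_sym (restr_sym _)) H.
Qed.

Lemma reach_component (S : {set T}) (x : T) : x \in S -> component E S (reach S x).
Proof.
move=> xS; split.
- apply/subsetP => y; rewrite inE => /connect_in; exact.
- exact: reach_connected.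
move=> K' sub sub' /connected_pathP C; apply/setP => y.
apply/idP/idP => [yK|]; last by move/(subsetP sub).
rewrite inE; apply: connect_mono sub' _; apply: C => //.
by apply: (subsetP sub); apply: reach_self.
Qed.

Lemma component_reach (S K : {set T}) (x : T) : component E S K -> x \in K -> K = reach S x.
Proof.
move=> [sub /connected_pathP C M] xK.
have KR : K \subset reach S x.
  apply/subsetP => y yK; rewrite inE; apply: connect_mono sub _; exact: C.
apply/esym; apply: M => //.
  by case: (reach_component (subsetP sub x xK)).
exact: reach_connected.
Qed.

Lemma component_nonempty (S K : {set T}) : component E S K -> S != set0 -> K != set0.
Proof.
move=> [sub C M] /set0Pn [s sS]; apply/negP => /eqP K0.
have : [set s] = K.
  apply: M; first by rewrite K0 sub0set.
    by rewrite sub1set.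
  by apply/connected_pathP => a b; rewrite !inE => /eqP-> /eqP->; apply: connect0.
by rewrite K0 => /setP /(_ s); rewrite !inE eqxx.
Qed.

End Conn.

Section Lift.
Variables (T1 T2 : finType) (E1 : rel T1) (E2 : rel T2) (phi : T1 -> T2).

Definition liftp := forall x a, E2 (phi x) a -> exists y z,
  [/\ connect (restr E1 (phi @^-1: [set phi x])) x y, E1 y z & phi z = a].

Lemma lift_confluent : symmetric E1 -> (forall a, exists x, phi x = a) -> liftp ->
  confluent E1 E2 phi.
Proof.
move=> S1 surj L Q CQ K CK.
case: (set_0Vmem Q) => [Q0|[a aQ]].
  apply/eqP; rewrite eqEsubset Q0 sub0set andbT; apply/subsetP => b /imsetP [y yK _].
  case: CK => sub _ _; have := subsetP sub y yK; by rewrite inE Q0 inE.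
have [x0 Hx0] := surj a.
have : phi @^-1: Q != set0 by apply/set0Pn; exists x0; rewrite inE Hx0.
move/(component_nonempty CK) => /set0Pn [k kK].
have KR := component_reach S1 CK kK.
case: CK => sub _ _.
apply/eqP; rewrite eqEsubset; apply/andP; split.
  apply/subsetP => b /imsetP [y yK ->]; have := subsetP sub y yK; by rewrite inE.
apply/subsetP => q qQ; apply/idPn => qK.
apply: CQ; exists (phi @: K), (Q :\: phi @: K); split.
- apply/setP => b; rewrite !inE; case bK: (b \in phi @: K) => /=; last by [].
  move/imsetP: bK => [y yK ->]; have := subsetP sub y yK; by rewrite inE => ->.
- by apply/set0Pn; exists (phi k); apply: imset_f.
- by apply/set0Pn; exists q; rewrite !inE qK qQ.
- rewrite -setI_eq0; apply/eqP/setP => b; rewrite !inE; by case: (b \in _); rewrite ?andbF.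
move=> b c /imsetP [y yK ->]; rewrite !inE => /andP[cK cQ]; apply/negP => E.
have [y' [z [Cy Eyz Hz]]] := L y c E.
have yS : phi y \in Q by have := subsetP sub y yK; rewrite inE.
have Cy' : connect (restr E1 (phi @^-1: Q)) y y'.
  apply: connect_mono Cy; apply/subsetP => w; rewrite !inE => /eqP ->; exact: yS.
have y'S : y' \in phi @^-1: Q by apply: (connect_in Cy'); rewrite inE.
have zS : z \in phi @^-1: Q by rewrite inE Hz.
have zK : z \in K.
  have ky : connect (restr E1 (phi @^-1: Q)) k y by move: yK; rewrite KR inE.
  rewrite KR inE; apply: connect_trans ky _.
  apply: connect_trans Cy' _; apply: connect1; by rewrite /restr /= Eyz y'S zS.
by move: cK; rewrite -Hz imset_f.
Qed.

Lemma confluent_lift : reflexive E1 -> symmetric E1 -> symmetric E2 ->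
  confluent E1 E2 phi -> liftp.
Proof.
move=> R1 S1 S2 Cf x a Exa.
pose Q := [set phi x; a].
have CQ : connected_set E2 Q.
  apply/connected_pathP => u v; rewrite !inE => /orP[] /eqP -> /orP[] /eqP ->;
    rewrite ?connect0 //; apply: connect1; rewrite /restr /= !inE !eqxx ?orbT ?andbT //=.
  by rewrite S2.
pose S := phi @^-1: Q.
have xS : x \in S by rewrite !inE eqxx.
have := Cf Q CQ _ (reach_component S1 xS) => im.
have : a \in phi @: reach E1 S x by rewrite im !inE eqxx orbT.
case/imsetP => z; rewrite inE => /connectP [s Ps ->] Ha.
have : forall u, phi u = phi x -> path (restr E1 S) u s -> phi (last u s) = a ->
  exists y z, [/\ connect (restr E1 (phi @^-1: [set phi x])) u y, E1 y z & phi z = a].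
  elim: s {Ps Ha} => [|v s IH] u Hu /=.
    by move=> _ Hl; exists u, u; rewrite connect0 R1.
  move=> /andP[/and3P[Euv uS vS] P] Hl.
  case: (eqVneq (phi v) a) => [Hv|Hv]; first by exists u, v; rewrite connect0.
  have Hv' : phi v = phi x.
    by move: vS; rewrite !inE => /orP[/eqP //|/eqP Hv2]; rewrite Hv2 eqxx in Hv.
  have [y [w [C1 E1yw Hw]]] := IH v Hv' P Hl.
  exists y, w; split => //; apply: connect_trans C1; apply: connect1.
  by rewrite /restr /= Euv !inE Hu Hv' eqxx.
by move/(_ x erefl Ps (esym Ha)).
Qed.

Lemma light_fiber x y : light E1 phi ->
  connect (restr E1 (phi @^-1: [set phi x])) x y -> y = x.
Proof.
move=> Lt /connectP [s Ps ->].
move: Ps; set F := phi @^-1: _ => Ps.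
have H : forall u, u \in F -> path (restr E1 F) u s -> last u s = u.
  elim: s {Ps} => //= v s IH u uF /andP[/and3P[Euv _ vF] P].
  have vu : v = u.
    apply/eqP; apply: contraTT Euv => vu; apply: Lt; first by rewrite eq_sym.
    by move: uF vF; rewrite !inE => /eqP -> /eqP ->.
  by subst v; apply: IH.
by apply: H => //; rewrite !inE.
Qed.

End Lift.


Section Struct2.
Variables (T : finType) (E : rel T) (r : T) (p : T -> T) (h : T -> nat).
Hypothesis PS : pstruct E r p h.

Lemma ps_pp x y : p x = y -> p y = x -> x = y.
Proof.
move=> pxy pyx; case: (eqVneq x r) => [xr|xr].
  by rewrite -pxy xr (ps_root PS).
case: (eqVneq y r) => [yr|yr].
  by move: pyx; rewrite yr (ps_root PS) => ->.
have := ps_dec PS xr; have := ps_dec PS yr; rewrite pxy pyx => H1 H2.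
by have := ltn_trans H1 H2; rewrite ltnn.
Qed.

Lemma ps_end x : end_vertex E r x <-> x != r /\ (forall y, E x y -> y != x -> y = p x).
Proof.
rewrite /end_vertex /order.
have px : forall x, x != r -> p x \in [set y | (y != x) && E x y].
  by move=> z zr; rewrite inE (ps_neq PS zr) (ps_edge PS).
split.
  move=> [xr /eqP /cards1P [z Hz]]; split => // y Exy yx.
  have := px x xr; rewrite Hz inE => /eqP ->.
  have : y \in [set y | (y != x) && E x y] by rewrite inE yx Exy.
  by rewrite Hz inE => /eqP.
move=> [xr H]; split => //.
apply/eqP/cards1P; exists (p x).
apply/setP => y; rewrite !inE; apply/idP/idP.
  by move=> /andP[yx Exy]; rewrite (H y Exy yx).
by move/eqP ->; rewrite (ps_neq PS xr) (ps_edge PS).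
Qed.

End Struct2.

Section Maps.
Variables (T1 T2 : finType) (E1 : rel T1) (r1 : T1) (p1 : T1 -> T1) (h1 : T1 -> nat)
  (E2 : rel T2) (r2 : T2) (p2 : T2 -> T2) (h2 : T2 -> nat) (phi : T1 -> T2).
Hypotheses (PS1 : pstruct E1 r1 p1 h1) (PS2 : pstruct E2 r2 p2 h2).

Lemma map_parent :
  (forall a b, E1 a b -> E2 (phi a) (phi b)) ->
  (forall a b, tree_le E1 r1 a b -> tree_le E2 r2 (phi a) (phi b)) ->
  forall x, phi (p1 x) = phi x \/ phi (p1 x) = p2 (phi x).
Proof.
move=> He Ho x.
have : tree_le E1 r1 (p1 x) x by apply/(ps_tree_le PS1); exists 1.
move/Ho/(ps_tree_le PS2) => [k Hk].
apply: (ps_adj_anc PS2 Hk); apply: He; rewrite (ps_sym PS1); exact: ps_edge PS1 x.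
Qed.

Lemma parent_order :
  (forall x, phi (p1 x) = phi x \/ phi (p1 x) = p2 (phi x)) ->
  forall a b, tree_le E1 r1 a b -> tree_le E2 r2 (phi a) (phi b).
Proof.
move=> H a b /(ps_tree_le PS1) [k <-]; apply/(ps_tree_le PS2).
elim: k => [|k [j Hj]]; first by exists 0.
rewrite iterS; case: (H (iter k p1 b)) => ->; first by exists j.
by exists j.+1; rewrite iterS Hj.
Qed.

Hypothesis Lt : light E1 phi.
Hypothesis Hroot : phi r1 = r2.
Hypothesis Hpar : forall x, phi (p1 x) = phi x \/ phi (p1 x) = p2 (phi x).

Lemma light_parent x : x != r1 -> phi (p1 x) = p2 (phi x).
Proof.
move=> xr; case: (Hpar x) => // H.
have := Lt (ps_neq PS1 xr) H; by rewrite (ps_sym PS1) (ps_edge PS1).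
Qed.

Lemma light_root x : phi x = r2 -> x = r1.
Proof.
move=> Hx; apply/eqP; apply/negP => /negP xr.
have := light_parent xr; rewrite Hx (ps_root PS2) => H.
have := Lt (ps_neq PS1 xr) (etrans H (esym Hx)).
by rewrite (ps_sym PS1) (ps_edge PS1).
Qed.

End Maps.


Lemma connect_img (T1 T2 : finType) (e1 : rel T1) (e2 : rel T2) (psi : T1 -> T2) x y :
  (forall u v, e1 u v -> e2 (psi u) (psi v)) -> connect e1 x y -> connect e2 (psi x) (psi y).
Proof.
move=> H /connectP [s P ->]; apply/connectP; exists (map psi s); last by rewrite last_map.
elim: s x P => //= v s IH u /andP[euv P]; by rewrite H // IH.
Qed.

Section Main.
Variables (A B C : finType) (EA : rel A) (rA : A) (EB : rel B) (rB : B)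
  (EC : rel C) (rC : C) (f : B -> A) (g : C -> A).
Hypotheses (TA : is_tree EA) (TB : is_tree EB) (TC : is_tree EC)
  (EpF : epimorphism EB rB EA rA f) (LF : light EB f) (CF : confluent EB EA f)
  (EpG : epimorphism EC rC EA rA g) (CG : confluent EC EA g).

Let pA := tp rA TA. Let hA := th rA TA. Let PA : pstruct EA rA pA hA := tr_pstruct rA TA.
Let pB := tp rB TB. Let hB := th rB TB. Let PB : pstruct EB rB pB hB := tr_pstruct rB TB.
Let pC := tp rC TC. Let hC := th rC TC. Let PC : pstruct EC rC pC hC := tr_pstruct rC TC.

Let fE : forall a b, EB a b -> EA (f a) (f b). Proof. by case: EpF. Qed.
Let fS : forall a, exists b, f b = a. Proof. by case: EpF. Qed.
Let fSE : forall c d, EA c d -> exists a b, [/\ EB a b, f a = c & f b = d].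
Proof. by case: EpF. Qed.
Let fR : f rB = rA. Proof. by case: EpF. Qed.
Let fO : forall a b, tree_le EB rB a b -> tree_le EA rA (f a) (f b). Proof. by case: EpF. Qed.
Let gE : forall a b, EC a b -> EA (g a) (g b). Proof. by case: EpG. Qed.
Let gS : forall a, exists b, g b = a. Proof. by case: EpG. Qed.
Let gSE : forall c d, EA c d -> exists a b, [/\ EC a b, g a = c & g b = d].
Proof. by case: EpG. Qed.
Let gR : g rC = rA. Proof. by case: EpG. Qed.
Let gO : forall a b, tree_le EC rC a b -> tree_le EA rA (g a) (g b). Proof. by case: EpG. Qed.

Let fpar x : f (pB x) = f x \/ f (pB x) = pA (f x).
Proof. exact: (map_parent PB PA fE fO). Qed.
Let gpar x : g (pC x) = g x \/ g (pC x) = pA (g x).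
Proof. exact: (map_parent PC PA gE gO). Qed.
Let flroot x : f x = rA -> x = rB.
Proof. exact: (light_root PB PA LF fpar). Qed.
Let flpar x : x != rB -> f (pB x) = pA (f x).
Proof. exact: (light_parent PB LF fpar). Qed.

Let LGl : liftp EC EA g.
Proof. exact: (confluent_lift (tr_refl TC) (tr_sym TC) (tr_sym TA) CG). Qed.
Let LF1 b a : EA (f b) a -> exists b', EB b b' /\ f b' = a.
Proof.
move=> H; have [y [z [Cy Eyz Hz]]] := confluent_lift (tr_refl TB) (tr_sym TB) (tr_sym TA) CF H.
by exists z; rewrite -(light_fiber LF Cy).
Qed.

Definition Dt := {p : B * C | f p.1 == g p.2}.
Definition ED : rel Dt := fun p q => EB (val p).1 (val q).1 && EC (val p).2 (val q).2.
Definition f0 (d : Dt) : B := (val d).1.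
Definition g0 (d : Dt) : C := (val d).2.

Let rDP : f (rB, rC).1 == g (rB, rC).2. Proof. by rewrite /= fR gR. Qed.
Definition rD : Dt := exist _ (rB, rC) rDP.

Definition mkD b c (H : f b == g c) : Dt :=
  exist (fun p : B * C => f p.1 == g p.2) (b, c) H.

Let Dfg (d : Dt) : f (val d).1 = g (val d).2. Proof. exact: eqP (valP d). Qed.

Definition pDpair (d : Dt) : B * C :=
  (if g (pC (val d).2) == g (val d).2 then (val d).1 else pB (val d).1, pC (val d).2).

Let pDpairP d : f (pDpair d).1 == g (pDpair d).2.
Proof.
rewrite /pDpair /=; case: ifP => [/eqP ->|/eqP H]; first by rewrite Dfg.
case: (eqVneq (val d).1 rB) => [bR|bR].
  exfalso; have gc : g (val d).2 = rA by rewrite -Dfg bR fR.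
  by case: (gpar (val d).2) => H'; apply: H; rewrite H' // gc (ps_root PA).
rewrite flpar // Dfg; case: (gpar (val d).2) => H' //; by rewrite H'.
Qed.

Definition pD (d : Dt) : Dt := exist _ (pDpair d) (pDpairP d).
Definition hD (d : Dt) : nat := hC (val d).2.

Let D_root (d : Dt) : (val d).2 = rC -> d = rD.
Proof.
case: d => [[b c] H] /= cr; apply: val_inj => /=; subst c.
by have := eqP H; rewrite /= gR => /flroot ->.
Qed.

Let ED_sym : symmetric ED.
Proof. by move=> d d'; rewrite /ED (tr_sym TB) (tr_sym TC). Qed.
Let ED_refl : reflexive ED.
Proof. by move=> d; rewrite /ED (tr_refl TB) (tr_refl TC). Qed.

Let edge_child d d' : ED d d' -> d != d' -> (val d').2 = pC (val d).2 -> d' = pD d.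
Proof.
case: d => [[b c] H]; case: d' => [[b' c'] H'] /=.
rewrite /ED /= => /andP[Ebb Ecc] dd c'p.
have fb : f b = g c by apply/eqP.
have fb' : f b' = g c' by apply/eqP.
apply: val_inj; rewrite /= /pDpair /= -c'p; congr pair.
case: ifP => [/eqP gcc|/eqP gcc].
  apply/eqP; apply/negP => /negP bb.
  have := LF bb; rewrite fb fb' gcc => /(_ erefl); by rewrite (tr_sym TB) Ebb.
have gpc : g c' = pA (g c) by case: (gpar c); rewrite -c'p => // /esym.
have bb : b != b'.
  by apply/eqP => bb; apply: gcc; rewrite -fb' -fb bb.
case: (ps_edges PB Ebb bb) => // bpb'.
have b'r : b' != rB.
  apply/eqP => b'r; move: bb; by rewrite bpb' b'r (ps_root PB) eqxx.
have := flpar b'r; rewrite -bpb' => fbp.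
have fb'p : f b' = pA (f b) by rewrite fb' gpc fb.
have fbb := ps_pp PA (esym fbp) (esym fb'p).
by exfalso; apply: gcc; rewrite -fb' -fb fbb.
Qed.

Lemma PSD : pstruct ED rD pD hD.
Proof.
split.
- by split; [exact: ED_refl | exact: ED_sym].
- by apply: val_inj; rewrite /= /pDpair /= (ps_root PC) eqxx.
- move=> d dr; rewrite /hD /=; apply: (ps_dec PC).
  by apply/eqP => cr; move: dr; rewrite (D_root cr) eqxx.
- move=> d; rewrite /ED /= /pDpair /=; rewrite (ps_edge PC) andbT.
  by case: ifP => _; rewrite ?(tr_refl TB) ?(ps_edge PB).
move=> d d' Edd dd.
have cc : (val d).2 != (val d').2.
  apply/eqP => cc; move: dd; case: d Edd cc => [[b c] H]; case: d' => [[b' c'] H'].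
  rewrite /ED /= => /andP[Ebb _] cc; subst c'.
  case: (eqVneq b b') => [bb'|bb]; first by subst b'; rewrite (bool_irrelevance H H') eqxx.
  have := LF bb; rewrite (eqP H) (eqP H') => /(_ erefl); by rewrite Ebb.
case: (ps_edges PC (_ : EC (val d).2 (val d').2) cc).
- by case/andP: Edd.
- by move=> H; left; apply: edge_child.
by move=> H; right; apply: edge_child; rewrite 1?ED_sym // eq_sym.
Qed.

Lemma TD : is_tree ED. Proof. exact: ps_tree PSD. Qed.


Lemma f0_epi : epimorphism ED rD EB rB f0.
Proof.
split.
- by move=> a b /andP[].
- move=> b; have [c Hc] := gS (f b).
  have H : f (b, c).1 == g (b, c).2 by rewrite /= Hc.
  by exists (mkD H).
- move=> b b' Ebb; have [c [c' [Ecc Hc Hc']]] := gSE (fE Ebb).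
  have H1 : f (b, c).1 == g (b, c).2 by rewrite /= Hc.
  have H2 : f (b', c').1 == g (b', c').2 by rewrite /= Hc'.
  by exists (mkD H1), (mkD H2); split => //; rewrite /ED /= Ebb Ecc.
- by [].
apply: (parent_order PSD PB) => d; rewrite /f0 /= /pDpair /=.
by case: ifP => _; [left|right].
Qed.

Lemma g0_epi : epimorphism ED rD EC rC g0.
Proof.
split.
- by move=> a b /andP[].
- move=> c; have [b Hb] := fS (g c).
  have H : f (b, c).1 == g (b, c).2 by rewrite /= Hb.
  by exists (mkD H).
- move=> c c' Ecc; have [b Hb] := fS (g c).
  have [b' [Ebb Hb']] : exists b', EB b b' /\ f b' = g c' by apply: LF1; rewrite Hb gE.
  have H1 : f (b, c).1 == g (b, c).2 by rewrite /= Hb.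
  have H2 : f (b', c').1 == g (b', c').2 by rewrite /= Hb'.
  by exists (mkD H1), (mkD H2); split => //; rewrite /ED /= Ebb Ecc.
- by [].
apply: (parent_order PSD PC) => d; rewrite /g0 /= /pDpair /=.
by right.
Qed.

Lemma g0_light : light ED g0.
Proof.
move=> [[b c] H] [[b' c'] H']; rewrite /g0 /ED /= => dd cc; subst c'.
apply/negP => /andP[Ebb _].
case: (eqVneq b b') => [bb'|bb].
  by subst b'; move: dd; rewrite (bool_irrelevance H H') eqxx.
have := LF bb; rewrite (eqP H) (eqP H') => /(_ erefl); by rewrite Ebb.
Qed.

Lemma f0_light : light EC g -> light ED f0.
Proof.
move=> LG [[b c] H] [[b' c'] H']; rewrite /f0 /ED /= => dd bb; subst b'.
apply/negP => /andP[_ Ecc].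
case: (eqVneq c c') => [cc'|cc].
  by subst c'; move: dd; rewrite (bool_irrelevance H H') eqxx.
have := LG _ _ cc; rewrite -(eqP H) -(eqP H') => /(_ erefl); by rewrite Ecc.
Qed.

Lemma f0_conf : confluent ED EB f0.
Proof.
apply: lift_confluent ED_sym _ _; first by case: f0_epi.
move=> [[b c] H] b'; rewrite /f0 /= => Ebb.
have fb : f b = g c := eqP H.
have Ea : EA (g c) (f b') by rewrite -fb fE.
have [y [z [Cy Eyz Hz]]] := LGl Ea.
pose d0 : Dt := mkD H.
pose psi u : Dt := insubd d0 (b, u).
have psiv u : g u = g c -> val (psi u) = (b, u).
  by move=> gu; rewrite /psi insubdK // unfold_in /= fb gu.
have Hz' : f (b', z).1 == g (b', z).2 by rewrite /= Hz.
have gy : g y = g c.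
  have : y \in g @^-1: [set g c] by apply: (connect_in Cy); rewrite !inE.
  by rewrite !inE => /eqP.
exists (psi y), (mkD Hz'); split.
- have E0 : mkD H = psi c by apply: val_inj; rewrite psiv.
  suff C0 : connect (restr ED (f0 @^-1: [set f0 (psi c)])) (psi c) (psi y).
    by rewrite -E0 in C0.
  apply: connect_img Cy => u v /and3P[Euv uF vF].
  move: uF vF; rewrite !inE => /eqP gu /eqP gv.
  by rewrite /restr /ED /= !inE /f0 !psiv //= (tr_refl TB) Euv eqxx.
- by rewrite /ED psiv //= Ebb Eyz.
- by [].
Qed.

Lemma g0_conf : confluent ED EC g0.
Proof.
apply: lift_confluent ED_sym _ _; first by case: g0_epi.
move=> [[b c] H] c'; rewrite /g0 /= => Ecc.
have fb : f b = g c := eqP H.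
have [b' [Ebb Hb']] : exists b', EB b b' /\ f b' = g c' by apply: LF1; rewrite fb gE.
have H' : f (b', c').1 == g (b', c').2 by rewrite /= Hb'.
exists (mkD H), (mkD H'); split => //.
by rewrite /ED /= Ebb Ecc.
Qed.

Lemma cEnd d : end_vertex ED rD d -> end_vertex EC rC (g0 d).
Proof.
move/(ps_end PSD) => [dr Hd]; apply/(ps_end PC); split.
  by apply/eqP => cr; move: dr; rewrite (D_root cr) eqxx.
move: dr Hd; case: d => [[b c] H]; rewrite /g0 /= => dr Hd c' Ecc cc.
have fb : f b = g c := eqP H.
have [b' [Ebb Hb']] : exists b', EB b b' /\ f b' = g c' by apply: LF1; rewrite fb gE.
have H' : f (b', c').1 == g (b', c').2 by rewrite /= Hb'.
have := Hd (mkD H'); rewrite /ED /= Ebb Ecc => /(_ isT).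
have ne : mkD H' != mkD H.
  by apply/eqP => /(congr1 (fun x : Dt => (val x).2)) /= E; rewrite E eqxx in cc.
by move=> /(_ ne) /(congr1 (fun x : Dt => (val x).2)).
Qed.

Lemma f0End : end_vertex_preserving EC rC EA rA g ->
  forall d, end_vertex ED rD d -> end_vertex EB rB (f0 d).
Proof.
move=> Hg d Ed; have gE' := Hg _ (cEnd Ed).
move: Ed gE'; case: d => [[b c] H]; rewrite /g0 /f0 /= => Ed.
have fb : f b = g c := eqP H.
move/(ps_end PA) => [gcr Hgc]; apply/(ps_end PB); split.
  by apply/eqP => br; move: gcr; rewrite -fb br fR eqxx.
move=> b' Ebb bb; apply/eqP; apply/negP => /negP bpb.
case: (ps_edges PB Ebb (_ : b != b')); first by rewrite eq_sym.
  by move=> b'p; rewrite b'p eqxx in bpb.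
move=> bp'.
have b'r : b' != rB.
  by apply/eqP => b'r; move: bb; rewrite bp' b'r (ps_root PB) eqxx.
have fbp : f b = pA (f b') by rewrite bp' flpar.
have fbb : f b' != f b.
  apply/eqP => fbb; have := LF bb fbb; by rewrite (tr_sym TB) Ebb.
have Ea : EA (g c) (f b') by rewrite -fb fE.
have Hfb' := Hgc (f b') Ea; rewrite -fb in Hfb'.
have := ps_pp PA (esym fbp) (esym (Hfb' fbb)).
by move=> E; rewrite E eqxx in fbb.
Qed.

End Main.



Theorem theorem5p16
  (A B C : finType) (EA : rel A) (rA : A) (EB : rel B) (rB : B)
  (EC : rel C) (rC : C) (f : B -> A) (g : C -> A) :
  is_tree EA -> is_tree EB -> is_tree EC ->
  epimorphism EB rB EA rA f -> light EB f -> confluent EB EA f ->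
  epimorphism EC rC EA rA g -> confluent EC EA g ->
  let D := {p : B * C | f p.1 == g p.2} in
  let ED : rel D := fun p q => EB (val p).1 (val q).1 && EC (val p).2 (val q).2 in
  let f0 : D -> B := fun p => (val p).1 in
  let g0 : D -> C := fun p => (val p).2 in
  exists rD : D,
    [/\ val rD = (rB, rC),
        is_tree ED,
        epimorphism ED rD EB rB f0 /\ confluent ED EB f0,
        [/\ epimorphism ED rD EC rC g0, light ED g0 & confluent ED EC g0] &
        (forall d : D, f (f0 d) = g (g0 d))] /\
    (light EC g -> light ED f0) /\
        (end_vertex_preserving EB rB EA rA f ->
         end_vertex_preserving EC rC EA rA g ->
         end_vertex_preserving ED rD EB rB f0 /\
         end_vertex_preserving ED rD EC rC g0).
Proof.
move=> TA TB TC EpF LF CF EpG CG D ED0 f0' g0'.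
exists (rD EpF EpG); split; first split.
- by [].
- exact: (TD TA TB TC EpF LF EpG).
- split; [exact: (f0_epi TA TB TC EpF LF EpG) | exact: (f0_conf TA TB TC EpF LF EpG CG)].
- split; [exact: (g0_epi TA TB TC EpF LF CF EpG) | exact: (g0_light EC LF)
         | exact: (g0_conf TA TB TC EpF LF CF EpG)].
- by move=> d; apply/eqP; exact: (valP d).
split.
- by move=> LG; exact: (f0_light EB LG).
move=> Hf Hg; split => d Hd.
- exact: (f0End TA TB TC LF CF Hg Hd).
- exact: (cEnd TA TB TC LF CF Hd).
Qed.
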